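(* The process $(X_t)_t$ belongs to the class $\mathcal{G}$ if and only if for each $t$ there exists a random variable $Z_t$ in ${\cal V}_N$ such that $p_{t-1\to t}(\bm{x},\bm{y}):= \mathbb{P}\big (X_t=\bm{y}\mid X_{t-1}=\bm{x}\big )$ can be expanded as \[ p_{t-1\to t}(\bm{x},\bm{y}) = \varphi^{\|\bm{y}\|}(1-\varphi)^{N-\|\bm{y}\|}\Bigg \{ 1 + \sum_{A\subseteq [N], A\ne \emptyset}\kappa_{t,A}\prod_{k \in A} \Big (1 - \frac{\bm{y}[k]}{\varphi}\Big )\Big (1 - \frac{\bm{x}[k]}{\gamma}\Big )\Bigg \}, \] where \[ \kappa_{t,A}= \Big (\frac{\alpha}{1-\alpha}\Big )^{|A|}\mathbb{E}\Big [ \prod_{k \in A}\Big (1 - \frac{Z_t[k]}{\alpha}\Big ) \Big ] = (-1)^{|A|}\mathbb{E}\Big [\Big (-\frac{\alpha}{1-\alpha}\Big )^{\sum_{k\in A}(1-Z_t[k])}\Big ], \] with $\alpha=\min\{\varphi,\gamma\}$.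
   Context: Let ${\cal V}_N=\{0,1\}^N$ be the vertices of the $N$-dimensional hypercube, $[N]=\{1,\dots,N\}$, and for $\bm{x}\in{\cal V}_N$ let $\|\bm{x}\|$ denote the number of coordinates equal to one. $(X_t)_t$ is a (possibly time-inhomogeneous) Markov process on ${\cal V}_N$, and $\varphi,\gamma\in(0,1)$ are parameters with $\varphi+\gamma\geq 1$ (achievable without loss of generality by swapping the roles of $0$ and $1$). The process is said to belong to the class $\mathcal{G}$ if it satisfies the following two conditions. Condition 1: For each $t\in\mathbb{N}$, $X_t$ has the product measure of $N$ Bernoulli$(\varphi)$ coordinates whenever $X_{t-1}$ has the product measure of $N$ Bernoulli$(\gamma)$ coordinates, and the following form of reversibility holds: \[ \gamma^{\|\bm{x}\|}(1-\gamma)^{N-\|\bm{x}\|}\mathbb{P}\big (X_t=\bm{y}\mid X_{t-1}=\bm{x};\varphi,\gamma\big )= \varphi^{\|\bm{y}\|}(1-\varphi)^{N-\|\bm{y}\|} \mathbb{P}\big (X_t=\bm{x}\mid X_{t-1}=\bm{y};\gamma,\varphi\big ), \] where the parameters $\varphi,\gamma$ are interchanged on the right-hand side (i.e. the right side is the transition probability of the model with the roles of $\varphi$ and $\gamma$ swapped); when $\varphi=\gamma$ this is ordinary reversibility. Condition 2 (local change): For $B\subseteq[N]$ and $\bm{y}\in{\cal V}_N$ let $\bm{y}(B)=(\bm{y}[j], j\in B)$. For each $t\in\mathbb{N}$, all $B\subseteq [N]$ and all $C\subseteq\{0,1\}^B$, \[ \mathbb{P}(X_t(B)\in C\mid X_{t-1})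 = \mathbb{P}(X_t(B)\in C\mid X_{t-1}(B)). \] *)

(* Defs.v *)
From HB Require Import structures.
From mathcomp Require Import all_boot all_order all_algebra.
Set Implicit Arguments. Unset Strict Implicit. Unset Printing Implicit Defensive.
Import Order.TTheory GRing.Theory Num.Theory.
Local Open Scope ring_scope.

Definition vert (N : nat) := {ffun 'I_N -> bool}.

Definition hnorm (N : nat) (x : vert N) : nat := #|[set i | x i]|.

Definition bern (R : realFieldType) (N : nat) (p : R) (x : vert N) : R :=
  p ^+ hnorm x * (1 - p) ^+ (N - hnorm x).

(* A transition kernel on V_N : K x y = P(X_t = y | X_{t-1} = x). *)
Definition kernel (R : realFieldType) (N : nat) := vert N -> vert N -> R.

Definition stochastic (R : realFieldType) (N : nat) (K : kernel R N) : Prop :=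
  (forall x y, 0 <= K x y) /\ (forall x, \sum_(y : vert N) K x y = 1).

(* X_{t-1} ~ Bern(g)^N  implies  X_t ~ Bern(f)^N *)
Definition maps_bern (R : realFieldType) (N : nat) (K : kernel R N) (f g : R) : Prop :=
  forall y : vert N, \sum_(x : vert N) bern g x * K x y = bern f y.

(* y(B), encoded as the vector equal to y on B and 0 outside B *)
Definition restr (N : nat) (B : {set 'I_N}) (y : vert N) : vert N :=
  [ffun i => if i \in B then y i else false].

(* Condition 2 (local change): P(X_t(B) \in C | X_{t-1}) depends on X_{t-1} only
   through X_{t-1}(B). *)
Definition local_change (R : realFieldType) (N : nat) (K : kernel R N) : Prop :=
  forall (B : {set 'I_N}) (C : {set vert N}) (x x' : vert N),
    restr B x = restr B x' ->
    \sum_(y : vert N | restr B y \in C) K x y =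
    \sum_(y : vert N | restr B y \in C) K x' y.

(* A (time-inhomogeneous) Markov model on V_N depending on the parameters:
   model f g t x y = P(X_t = y | X_{t-1} = x ; f, g), for t >= 1. *)
Definition model (R : realFieldType) (N : nat) := R -> R -> nat -> kernel R N.

(* The model with parameters interchanged,
   mdl gamma phi, is the one appearing on the right-hand side of the reversibility
   condition; it is itself a Markov process satisfying the local change condition. *)
Definition classG (R : realFieldType) (N : nat) (mdl : model R N) (phi gam : R) : Prop :=
  forall t : nat, (0 < t)%N ->
    [/\ stochastic (mdl phi gam t) /\ stochastic (mdl gam phi t),
        maps_bern (mdl phi gam t) phi gam,
        (forall x y : vert N,
           bern gam x * mdl phi gam t x y = bern phi y * mdl gam phi t y x),
        local_change (mdl phi gam t) & local_change (mdl gam phi t)].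

Definition distribution (R : realFieldType) (N : nat) (mu : vert N -> R) : Prop :=
  (forall z, 0 <= mu z) /\ \sum_(z : vert N) mu z = 1.

Definition kappa (R : realFieldType) (N : nat) (a : R) (mu : vert N -> R)
    (A : {set 'I_N}) : R :=
  (a / (1 - a)) ^+ #|A| *
  \sum_(z : vert N) mu z * \prod_(k in A) (1 - ((z k)%:R) / a).

Definition expansion (R : realFieldType) (N : nat) (K : kernel R N) (f g a : R)
    (mu : vert N -> R) : Prop :=
  forall x y : vert N,
    K x y = bern f y *
      (1 + \sum_(A : {set 'I_N} | A != set0)
             kappa a mu A *
             \prod_(k in A) ((1 - ((y k)%:R) / f) * (1 - ((x k)%:R) / g))).

(* Main.v *)
Require Import Defs.
From HB Require Import structures.
From mathcomp Require Import all_boot all_order all_algebra.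
From mathcomp Require Import ring lra.
Set Implicit Arguments. Unset Strict Implicit. Unset Printing Implicit Defensive.
Import Order.TTheory GRing.Theory Num.Theory.
Local Open Scope ring_scope.

Lemma sum_subsets (R : comPzRingType) (I : finType) (f : I -> R) :
  \sum_(A : {set I}) \prod_(k in A) f k = \prod_k (f k + 1).
Proof.
rewrite bigA_distr; apply: eq_bigr => A _; rewrite big_mkcond /=.
by apply: eq_bigr => i _.
Qed.

Definition b1 (R : realFieldType) (p : R) (b : bool) : R := if b then p else 1 - p.
Definition uu (R : realFieldType) (p : R) (b : bool) : R := 1 - (b%:R) / p.
Definition UU (R : realFieldType) N (p : R) (A : {set 'I_N}) (x : vert N) : R :=
  \prod_(k in A) uu p (x k).

Lemma bernE (R : realFieldType) N (p : R) (x : vert N) :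
  bern p x = \prod_k b1 p (x k).
Proof.
rewrite /bern /hnorm [RHS](bigID (fun k => x k)) /=.
rewrite [X in _ = X * _](eq_bigr (fun _ => p)); last by move=> k; rewrite /b1 => ->.
rewrite [X in _ = _ * X](eq_bigr (fun _ => 1 - p)); last by move=> k /negbTE; rewrite /b1 => ->.
rewrite !prodr_const; congr (_ ^+ _ * _ ^+ _).
  by apply: eq_card => k; rewrite inE.
have H := cardsC [set i | x i]; rewrite card_ord in H.
have -> : #|(fun i => ~~ x i)| = #|~: [set i | x i]|.
  by apply: eq_card => k; rewrite !inE.
by move: H; set a := #|[set i | x i]|; set b := #|~: _|; move=> <-; rewrite addKn.
Qed.

Lemma uuT (R : realFieldType) (p : R) : uu p true = 1 - p^-1.
Proof. by rewrite /uu /= mul1r. Qed.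
Lemma uuF (R : realFieldType) (p : R) : uu p false = 1.
Proof. by rewrite /uu /= mul0r subr0. Qed.

Lemma sum_b1uu (R : realFieldType) (p : R) : p != 0 ->
  \sum_(b : bool) b1 p b * uu p b = 0.
Proof. move=> p0; rewrite big_bool /= uuT uuF /b1 /=. field. exact: p0. Qed.

Lemma restr_ind (R : realFieldType) N (B : {set 'I_N}) (v y : vert N) :
  ((restr B y == v)%:R : R) =
  \prod_k (((if k \in B then y k else false) == v k)%:R : R).
Proof.
case: eqP => [<-|/eqP neq].
  by rewrite big1 // => k _; rewrite ffunE eqxx.
have [k Hk] : exists k, (if k \in B then y k else false) != v k.
  apply/existsP; apply: contraR neq => /existsPn H.
  by apply/eqP/ffunP => k; rewrite ffunE; apply/eqP; move: (H k); rewrite negbK.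
by rewrite (bigD1 k) //= (negbTE Hk) mul0r.
Qed.

Lemma sum_restr_prod (R : realFieldType) N (B : {set 'I_N}) (v : vert N)
    (G : 'I_N -> bool -> R) :
  \sum_(y : vert N | restr B y == v) \prod_k G k (y k) =
  \prod_k \sum_(b : bool) (((if k \in B then b else false) == v k)%:R * G k b).
Proof.
rewrite bigA_distr_bigA /= big_mkcond /=; apply: eq_bigr => y _.
rewrite big_split /= -restr_ind; case: eqP => _; by rewrite ?mul1r ?mul0r.
Qed.

Lemma sum_prod (R : realFieldType) N (G : 'I_N -> bool -> R) :
  \sum_(y : vert N) \prod_k G k (y k) = \prod_k \sum_(b : bool) G k b.
Proof. by rewrite bigA_distr_bigA. Qed.

Lemma regroup (R : realFieldType) N (A : {set 'I_N}) (K : vert N -> R)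
   (H : vert N -> R) :
  \sum_(y : vert N) K y * H (restr A y) =
  \sum_(v : vert N) H v * \sum_(y : vert N | restr A y \in [set v]) K y.
Proof.
rewrite (partition_big (restr A) predT) //=; apply: eq_bigr => v _.
rewrite big_distrr /=; apply: eq_big => [y|y /eqP ->]; first by rewrite in_set1.
by rewrite mulrC.
Qed.

Lemma restrK N (A : {set 'I_N}) (x : vert N) : restr A (restr A x) = restr A x.
Proof. by apply/ffunP => k; rewrite !ffunE; case: (k \in A). Qed.

Lemma UU_restr (R : realFieldType) N (p : R) (A : {set 'I_N}) (y : vert N) :
  UU p A y = UU p A (restr A y).
Proof. by apply: eq_bigr => k kA; rewrite ffunE kA. Qed.

Lemma bernUU (R : realFieldType) N (q : R) (A : {set 'I_N}) (x : vert N) :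
  bern q x * UU q A x =
  \prod_k (b1 q (x k) * (if k \in A then uu q (x k) else 1)).
Proof. by rewrite bernE /UU big_split /= [X in _ * X = _]big_mkcond. Qed.

Lemma killZ (R : realFieldType) N (q : R) (A A' : {set 'I_N}) (F : vert N -> R) k :
  q != 0 -> k \in A' -> k \notin A -> (forall x, F x = F (restr A x)) ->
  \sum_(x : vert N) bern q x * UU q A' x * F x = 0.
Proof.
move=> q0 kA' kA HF.
under eq_bigr => x _ do rewrite HF.
rewrite regroup big1 // => v _.
under eq_bigl => x do rewrite in_set1.
under eq_bigr => x _ do rewrite bernUU.
rewrite (sum_restr_prod A v (fun k b => b1 q b * (if k \in A' then uu q b else 1))) (bigD1 k) //= (negbTE kA) kA' /=.
have -> : \sum_(b : bool) (false == v k)%:R * (b1 q b * uu q b) = 0.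
  by rewrite -big_distrr /= sum_b1uu // mulr0.
by rewrite mul0r mulr0.
Qed.

Lemma bern_neq0 (R : realFieldType) N (q : R) (x : vert N) :
  0 < q < 1 -> bern q x != 0.
Proof.
move=> /andP[q0 q1]; rewrite bernE; apply/prodf_neq0 => k _.
rewrite /b1; case: (x k); [exact: lt0r_neq0 | by rewrite subr_eq0 eq_sym lt_eqF].
Qed.

Lemma delta1 (R : realFieldType) (q : R) (a b : bool) :
  0 < q < 1 ->
  q / (1 - q) * uu q a * uu q b + 1 = if a == b then (b1 q a)^-1 else 0.
Proof.
move=> /andP[q0 q1].
have h1 : q != 0 by exact: lt0r_neq0.
have h2 : 1 - q != 0 by by rewrite subr_eq0 eq_sym lt_eqF.
by case: a; case: b; rewrite /b1 /= ?uuT ?uuF; field; rewrite ?h1 ?h2.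
Qed.

Lemma delta (R : realFieldType) N (q : R) (x z : vert N) :
  0 < q < 1 ->
  \sum_(A : {set 'I_N}) (q / (1 - q)) ^+ #|A| * UU q A x * UU q A z =
  if x == z then (bern q x)^-1 else 0.
Proof.
move=> hq.
transitivity (\sum_(A : {set 'I_N}) \prod_(k in A) (q / (1 - q) * uu q (x k) * uu q (z k))).
  by apply: eq_bigr => A _; rewrite /UU -prodr_const -!big_split.
rewrite sum_subsets; under eq_bigr => k _ do rewrite delta1 //.
case: eqP => [<-|/eqP neq].
  by rewrite bernE -prodfV; apply: eq_bigr => k _; rewrite eqxx.
have [k Hk] : exists k, x k != z k.
  apply/existsP; apply: contraR neq => /existsPn H.
  by apply/eqP/ffunP => k; apply/eqP; move: (H k); rewrite negbK.
by rewrite (bigD1 k) //= (negbTE Hk) mul0r.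
Qed.

Lemma expand (R : realFieldType) N (q : R) (h : vert N -> R) (x : vert N) :
  0 < q < 1 ->
  h x = \sum_(A : {set 'I_N}) (q / (1 - q)) ^+ #|A| * UU q A x *
          \sum_(z : vert N) bern q z * UU q A z * h z.
Proof.
move=> hq.
transitivity (\sum_(z : vert N) bern q z * h z *
   (\sum_(A : {set 'I_N}) (q / (1 - q)) ^+ #|A| * UU q A x * UU q A z)).
  rewrite (bigD1 x) //= delta // eqxx big1 => [|z zx]; last first.
    by rewrite delta // eq_sym (negbTE zx) mulr0.
  by rewrite addr0 mulrC mulrA mulVf ?mul1r // bern_neq0.
under eq_bigr => z _ do rewrite big_distrr /=.
rewrite exchange_big /=; apply: eq_bigr => A _.
rewrite big_distrr /=; apply: eq_bigr => z _; ring.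
Qed.

Definition Phi (R : realFieldType) N (K : kernel R N) (p : R) (A : {set 'I_N})
  (x : vert N) : R := \sum_(y : vert N) K x y * UU p A y.

Definition v0 N : vert N := [ffun => false].

Lemma Phi_loc (R : realFieldType) N (K : kernel R N) p A :
  local_change K -> forall x, Phi K p A x = Phi K p A (restr A x).
Proof.
move=> HK x; rewrite /Phi.
under eq_bigr => y _ do rewrite UU_restr.
under [RHS]eq_bigr => y _ do rewrite UU_restr.
rewrite !regroup; apply: eq_bigr => v _; congr (_ * _).
by apply: HK; rewrite restrK.
Qed.

Lemma Gamma_zero (R : realFieldType) N (K K' : kernel R N) (p g : R)
    (A A'' : {set 'I_N}) :
  0 < p < 1 -> 0 < g < 1 -> local_change K -> local_change K' ->
  (forall x y, bern g x * K x y = bern p y * K' y x) -> A'' != A ->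
  \sum_(x : vert N) bern g x * UU g A'' x * Phi K p A x = 0.
Proof.
move=> /andP[p0 p1] /andP[g0 g1] HK HK' rev neq.
have p0' : p != 0 by exact: lt0r_neq0.
have g0' : g != 0 by exact: lt0r_neq0.
case: (boolP (A'' \subset A)) => sub; last first.
  have [k kA'' kA] := subsetPn sub.
  by apply: (killZ g0' kA'' kA); exact: Phi_loc.
have nsub : ~~ (A \subset A'').
  by apply: contra neq => sub'; rewrite eqEsubset sub sub'.
have [k kA kA''] := subsetPn nsub.
transitivity (\sum_(y : vert N) bern p y * UU p A y * Phi K' g A'' y); last first.
  by apply: (killZ p0' kA kA''); exact: Phi_loc.
rewrite /Phi.
under eq_bigr => x _ do rewrite big_distrr /=.
rewrite exchange_big /=; apply: eq_bigr => y _.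
rewrite big_distrr /=; apply: eq_bigr => x _.
have := rev x y; move=> e.
transitivity ((bern g x * K x y) * UU g A'' x * UU p A y); first by ring.
by rewrite e; ring.
Qed.

Lemma UU_v0 (R : realFieldType) N (g : R) (A : {set 'I_N}) : UU g A (v0 N) = 1.
Proof. by apply: big1 => k _; rewrite ffunE uuF. Qed.

Lemma PhiE (R : realFieldType) N (K K' : kernel R N) (p g : R) (A : {set 'I_N}) x :
  0 < p < 1 -> 0 < g < 1 -> local_change K -> local_change K' ->
  (forall x y, bern g x * K x y = bern p y * K' y x) ->
  Phi K p A x = UU g A x * Phi K p A (v0 N).
Proof.
move=> hp hg HK HK' rev.
have E : forall x, Phi K p A x = (g / (1 - g)) ^+ #|A| * UU g A x *
   \sum_(z : vert N) bern g z * UU g A z * Phi K p A z.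
  move=> x'; rewrite {1}(expand (Phi K p A) x' hg) (bigD1 A) //= [X in _ + X]big1 ?addr0 //.
  by move=> A'' nA; rewrite (Gamma_zero hp hg HK HK' rev nA) mulr0.
by rewrite E [in RHS]E UU_v0 mulr1; ring.
Qed.

Lemma L1 (R : realFieldType) N (K K' : kernel R N) (p g : R) :
  0 < p < 1 -> 0 < g < 1 -> stochastic K -> local_change K -> local_change K' ->
  (forall x y, bern g x * K x y = bern p y * K' y x) ->
  expansion K p g p (K (v0 N)).
Proof.
move=> hp hg [_ HS] HK HK' rev x y.
transitivity (bern p y * \sum_(A : {set 'I_N}) (p / (1 - p)) ^+ #|A| * UU p A y *
   \sum_(z : vert N) bern p z * UU p A z * (K x z / bern p z)).
  by rewrite -(expand (fun z => K x z / bern p z) y hp) mulrC divfK // bern_neq0.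
congr (_ * _).
have E : forall A, \sum_(z : vert N) bern p z * UU p A z * (K x z / bern p z) =
                   UU g A x * Phi K p A (v0 N).
  move=> A; rewrite -(@PhiE _ _ K K' p g A x hp hg HK HK' rev) /Phi; apply: eq_bigr => z _.
  have bz := bern_neq0 z hp; field; exact: bz.
under eq_bigr => A _ do rewrite E.
have U0 : forall (q : R) (z : vert N), UU q (set0 : {set 'I_N}) z = 1 by move=> q z; rewrite /UU big_set0.
rewrite (bigD1 set0) //= cards0 expr0 !U0 /Phi.
rewrite [X in 1 * 1 * (1 * X)](eq_bigr (fun y0 => K (v0 N) y0)); last by move=> z _; rewrite U0 mulr1.
rewrite HS !mul1r; congr (_ + _); apply: eq_bigr => A _.
rewrite /kappa big_split /= /UU; ring.
Qed.

Lemma transfer (R : realFieldType) N (K K' : kernel R N) (p g a : R) mu :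
  0 < p < 1 -> (forall x y, bern g x * K x y = bern p y * K' y x) ->
  expansion K p g a mu -> expansion K' g p a mu.
Proof.
move=> hp rev E y x; apply: (mulfI (bern_neq0 y hp)); rewrite -rev E.
set S := \sum_(A | _) _; set S' := \sum_(A | _) _.
have -> : S = S'.
  apply: eq_bigr => A _; congr (_ * _); apply: eq_bigr => k _; exact: mulrC.
ring.
Qed.

Definition cc (R : realFieldType) (a : R) (b : bool) : R := a / (1 - a) * uu a b.
Definition Qf (R : realFieldType) (a p g : R) (b xk yk : bool) : R :=
  b1 p yk * (1 + cc a b * (uu p yk * uu g xk)).

Lemma mixture (R : realFieldType) N (K : kernel R N) (p g a : R) mu :
  distribution mu -> expansion K p g a mu ->
  forall x y, K x y = \sum_(z : vert N) mu z * \prod_k Qf a p g (z k) (x k) (y k).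
Proof.
move=> [_ Hmu] E x y; rewrite E.
have kE : forall A, kappa a mu A = \sum_(z : vert N) mu z * \prod_(k in A) cc a (z k).
  move=> A; rewrite /kappa big_distrr /=; apply: eq_bigr => z _.
  rewrite /cc big_split /= prodr_const; ring.
transitivity (bern p y * \sum_(A : {set 'I_N}) kappa a mu A *
     \prod_(k in A) ((1 - ((y k)%:R) / p) * (1 - ((x k)%:R) / g))).
  congr (_ * _); rewrite [RHS](bigD1 set0) //= [X in _ = _ * X + _]big_set0 mulr1 (kE set0).
  congr (_ + _).
  by rewrite -[LHS]Hmu; apply: eq_bigr => z _; rewrite [X in _ = _ * X]big_set0 mulr1.
under eq_bigr => A _ do rewrite kE big_distrl /=.
rewrite exchange_big /= bernE big_distrr /=; apply: eq_bigr => z _.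
under [X in _ * X = _]eq_bigr => A _ do rewrite -mulrA -big_split /=.
rewrite -big_distrr /= sum_subsets mulrCA -big_split /=; congr (_ * _).
by apply: eq_bigr => k _; rewrite /Qf addrC.
Qed.

Lemma Q1 (R : realFieldType) (a p g : R) b xk : p != 0 ->
  \sum_(yk : bool) Qf a p g b xk yk = 1.
Proof. by move=> p0; rewrite big_bool /Qf /b1 /= uuT uuF; field. Qed.

Lemma Q2 (R : realFieldType) (a p g : R) b yk : g != 0 ->
  \sum_(xk : bool) b1 g xk * Qf a p g b xk yk = b1 p yk.
Proof. by move=> g0; rewrite big_bool /Qf /b1 /= !uuT !uuF; case: yk; field. Qed.

Lemma ccF (R : realFieldType) (a : R) : cc a false = a / (1 - a).
Proof. by rewrite /cc uuF mulr1. Qed.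
Lemma ccT (R : realFieldType) (a : R) : 0 < a < 1 -> cc a true = -1.
Proof.
move=> /andP[a0 a1]; rewrite /cc uuT.
have h1 : a != 0 by exact: lt0r_neq0.
have h2 : 1 - a != 0 by rewrite subr_eq0 eq_sym lt_eqF.
by field; rewrite h1 h2.
Qed.

Lemma Qnn (R : realFieldType) (a p g : R) b xk yk :
  0 < a < 1 -> a <= p -> a <= g -> p < 1 -> g < 1 -> 1 <= p + g ->
  0 <= Qf a p g b xk yk.
Proof.
move=> ha ap ag p1 g1 pg.
have [a0 a1] := andP ha.
have p0 : 0 < p by exact: lt_le_trans ap.
have g0 : 0 < g by exact: lt_le_trans ag.
rewrite /Qf; case: b; rewrite ?ccT ?ccF //; case: xk; case: yk;
  rewrite /b1 ?uuT ?uuF.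
all: set ip := p^-1; set ig := g^-1.
all: have hip : p * ip = 1 by rewrite mulfV // lt0r_neq0.
all: have hig : g * ig = 1 by rewrite mulfV // lt0r_neq0.
all: have ip0 : 0 < ip by rewrite invr_gt0.
all: have ig0 : 0 < ig by rewrite invr_gt0.
all: try set c := a / (1 - a).
all: try have hc : c * (1 - a) = a by rewrite /c mulfVK // subr_eq0 eq_sym lt_eqF.
all: try have c0 : 0 <= c by rewrite /c divr_ge0 // ?(ltW a0) // subr_ge0 ltW.
all: try nra.
- have ip1 : 1 <= ip by rewrite -hip; nra.
  have ig1 : 1 <= ig by rewrite -hig; nra.
  have h : 0 <= (1 - ip) * (1 - ig) by rewrite -mulrNN mulr_ge0 // opprB subr_ge0.
  have h2 : 0 <= c * ((1 - ip) * (1 - ig)) by exact: mulr_ge0.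
  nra.
- have e : (1 + c * (1 * (1 - ig))) * (g * (1 - a)) = g - a.
    rewrite /ig /c; field.
    by rewrite (lt0r_neq0 g0) subr_eq0 eq_sym lt_eqF.
  apply: mulr_ge0; first by rewrite subr_ge0 ltW.
  rewrite -(pmulr_lge0 _ (_ : 0 < g * (1 - a))); last by rewrite mulr_gt0 // subr_gt0.
  by rewrite e subr_ge0.
Qed.

Lemma local_prod (R : realFieldType) N (G : 'I_N -> bool -> bool -> R)
    (B : {set 'I_N}) (C : {set vert N}) (x x' : vert N) :
  (forall k xk, \sum_(b : bool) G k xk b = 1) -> restr B x = restr B x' ->
  \sum_(y : vert N | restr B y \in C) \prod_k G k (x k) (y k) =
  \sum_(y : vert N | restr B y \in C) \prod_k G k (x' k) (y k).
Proof.
move=> HG Hr.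
have step : forall x0 : vert N, \sum_(y : vert N | restr B y \in C) \prod_k G k (x0 k) (y k) =
   \sum_(v : vert N | v \in C) \prod_k \sum_(b : bool)
        (((if k \in B then b else false) == v k)%:R * G k (x0 k) b).
  move=> x0; rewrite (partition_big (restr B) (fun v => v \in C)) //=.
  apply: eq_bigr => v vC.
  rewrite -(sum_restr_prod B v (fun k b => G k (x0 k) b)); apply: eq_bigl => y.
  by case: (restr B y =P v) => [->|]; rewrite ?vC ?andbF.
rewrite !step; apply: eq_bigr => v _; apply: eq_bigr => k _.
case: (boolP (k \in B)) => kB.
  by have := congr1 (fun f : vert N => f k) Hr; rewrite /= !ffunE kB => ->.
by rewrite -!big_distrr /= !HG.
Qed.

Lemma mix_props (R : realFieldType) N (K : kernel R N) (p g a : R) mu :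
  distribution mu -> expansion K p g a mu ->
  0 < a < 1 -> a <= p -> a <= g -> p < 1 -> g < 1 -> 1 <= p + g ->
  [/\ stochastic K, maps_bern K p g & local_change K].
Proof.
move=> Hd E ha ap ag p1 g1 pg.
have M := mixture Hd E; have [mu0 musum] := Hd.
have [a0 a1] := andP ha.
have p0 : p != 0 by apply: lt0r_neq0; exact: lt_le_trans ap.
have g0 : g != 0 by apply: lt0r_neq0; exact: lt_le_trans ag.
split; first split.
- move=> x y; rewrite M; apply: sumr_ge0 => z _; apply: mulr_ge0 => //.
  by apply: prodr_ge0 => k _; exact: Qnn.
- move=> x; under eq_bigr => y _ do rewrite M.
  rewrite exchange_big /= -[RHS]musum; apply: eq_bigr => z _.
  rewrite -big_distrr /= (sum_prod (fun k b => Qf a p g (z k) (x k) b)).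
  by rewrite big1 ?mulr1 // => k _; rewrite Q1.
- move=> y; under eq_bigr => x _ do rewrite M big_distrr /=.
  rewrite exchange_big /=.
  transitivity (\sum_(z : vert N) mu z * bern p y); last first.
    by rewrite -big_distrl /= musum mul1r.
  apply: eq_bigr => z _.
  under eq_bigr => x _ do rewrite mulrCA bernE -big_split /=.
  rewrite -big_distrr /= bernE; congr (_ * _).
  rewrite (sum_prod (fun k b => b1 g b * Qf a p g (z k) b (y k))).
  by apply: eq_bigr => k _; rewrite Q2.
- move=> B C x x' Hr.
  under eq_bigr => y _ do rewrite M.
  under [RHS]eq_bigr => y _ do rewrite M.
  rewrite exchange_big [RHS]exchange_big /=; apply: eq_bigr => z _.
  rewrite -!big_distrr /=; congr (_ * _).
  apply: (@local_prod _ _ (fun k xk yk => Qf a p g (z k) xk yk) B C x x') => // k xk.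
  exact: Q1.
Qed.

Lemma rev_from (R : realFieldType) N (K K' : kernel R N) (p g a : R) mu :
  expansion K p g a mu -> expansion K' g p a mu ->
  forall x y, bern g x * K x y = bern p y * K' y x.
Proof.
move=> E E' x y; rewrite E E'.
set S := \sum_(A | _) _; set S' := \sum_(A | _) _.
have -> : S = S'.
  apply: eq_bigr => A _; congr (_ * _); apply: eq_bigr => k _; exact: mulrC.
ring.
Qed.

Unset Implicit Arguments.

Theorem proposition1 (R : realFieldType) (N : nat) (mdl : model R N) (phi gam : R) :
  0 < phi < 1 -> 0 < gam < 1 -> 1 <= phi + gam ->
  classG mdl phi gam <->
  (forall t : nat, (0 < t)%N ->
     exists mu : vert N -> R,
       distribution mu /\
       expansion (mdl phi gam t) phi gam (Num.min phi gam) mu /\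
       expansion (mdl gam phi t) gam phi (Num.min phi gam) mu).
Proof.
move=> hphi hgam pg; split.
- move=> HG t t0; have [[sK sK'] mb rev lK lK'] := HG t t0.
  have rev' : forall x y, bern phi x * mdl gam phi t x y = bern gam y * mdl phi gam t y x.
    by move=> x y; rewrite rev.
  case: (lerP phi gam) => h.
    exists (mdl phi gam t (v0 N)).
    have E := L1 hphi hgam sK lK lK' rev.
    split; first by split; [move=> z; exact: sK.1 | exact: sK.2].
    by split => //; exact: transfer hphi rev E.
    exists (mdl gam phi t (v0 N)).
    have E := L1 hgam hphi sK' lK' lK rev'.
    split; first by split; [move=> z; exact: sK'.1 | exact: sK'.2].
    by split => //; exact: transfer hgam rev' E.
- move=> H t t0; have [mu [Hd [E E']]] := H t t0.
  have [p0 p1] := andP hphi; have [g0 g1] := andP hgam.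
  have ap : Num.min phi gam <= phi by rewrite ge_min lexx.
  have ag : Num.min phi gam <= gam by rewrite ge_min lexx orbT.
  have ha : 0 < Num.min phi gam < 1.
    by rewrite lt_min p0 g0 /=; exact: le_lt_trans ap p1.
  have [sK mbK lK] := mix_props Hd E ha ap ag p1 g1 pg.
  have pg' : 1 <= gam + phi by rewrite addrC.
  have [sK' _ lK'] := mix_props Hd E' ha ag ap g1 p1 pg'.
  split => //; exact: rev_from E E'.
Qed.
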